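(* Let $\ket{\phi}$ be a state on $n/2$ qubits (indexed by $[n/2]$) which is at least $\epsilon$-far from every separable state along any internal cut, and let $t$ be even. Then $$\Delta_{\phi,t}:=\sum_{\substack{S\subseteq[n/2]\\ 1\notin S,\ S\ne\emptyset}}\mathrm{Tr}[\phi_S^2]^{t/2}\le 2^{n/2}(1-\epsilon^2)^{t/2}.$$ In particular, a choice of $t=O(n/\epsilon^2)$ makes $\Delta_{\phi,t}$ negligible in $n$.
   Context: $\phi_S$ denotes the reduced density matrix of $\ket{\phi}$ on the qubits in $S$. ''$\epsilon$-far from every separable state along any internal cut'' means: for every nonempty proper $A\subsetneq[n/2]$ and all states $\ket{a}_A,\ket{b}_{[n/2]\setminus A}$, $|\langle\phi|(\ket{a}_A\otimes\ket{b}_{[n/2]\setminus A})|^2\le1-\epsilon^2$. Negligible means smaller than any inverse polynomial in $n$ for large $n$. *)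

(* Defs.v *)
(* Amplitudes live in an arbitrary numClosedFieldType C
   (e.g. the complex numbers R[i] for R : realType, or algC). *)
From HB Require Import structures.
From mathcomp Require Import all_boot all_order all_algebra.
Set Implicit Arguments. Unset Strict Implicit. Unset Printing Implicit Defensive.
Import Order.TTheory GRing.Theory Num.Theory Num.Def.
Local Open Scope ring_scope.

Section Qubits.
Variable C : numClosedFieldType.
Variable m : nat.

Definition basis := {ffun 'I_m -> bool}.

(* the qubits of a subsystem S, and the computational basis of S *)
Definition sub_qubits (S : {set 'I_m}) := {i : 'I_m | i \in S}.
Definition asg (S : {set 'I_m}) := {ffun sub_qubits S -> bool}.

Definition glue (S : {set 'I_m}) (a : asg S) (b : asg (~: S)) : basis :=
  [ffun i => match (insub i : option (sub_qubits S)) with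
             | Some j => a j
             | None => match (insub i : option (sub_qubits (~: S))) with
                       | Some k => b k
                       | None => false
                       end
             end].

End Qubits.

(* a (pure) quantum state = unit vector of amplitudes *)
Definition is_unit_vec (C : numClosedFieldType) (I : finType) (v : I -> C) : Prop :=
  \sum_(i : I) `|v i| ^+ 2 = 1.

Definition rdm (C : numClosedFieldType) (m : nat) (psi : basis m -> C)
  (S : {set 'I_m}) (a a' : asg S) : C :=
  \sum_(b : asg (~: S)) psi (glue a b) * (psi (glue a' b))^*.

Definition purity (C : numClosedFieldType) (m : nat) (psi : basis m -> C)
  (S : {set 'I_m}) : C :=
  \sum_(a : asg S) \sum_(a' : asg S) rdm psi a a' * rdm psi a' a.

Definition overlap (C : numClosedFieldType) (m : nat) (psi : basis m -> C)
  (A : {set 'I_m}) (a : asg A -> C) (b : asg (~: A) -> C) : C :=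
  \sum_(x : asg A) \sum_(y : asg (~: A)) (psi (glue x y))^* * (a x * b y).

Definition far_from_separable (C : numClosedFieldType) (m : nat)
  (psi : basis m -> C) (eps : C) : Prop :=
  forall A : {set 'I_m}, A != set0 -> A != setT ->
  forall (a : asg A -> C) (b : asg (~: A) -> C),
    is_unit_vec a -> is_unit_vec b ->
    `|overlap psi a b| ^+ 2 <= 1 - eps ^+ 2.

(* Delta_{phi,t} = sum over nonempty S not containing the first qubit (index 0)
   of Tr[phi_S^2]^(t/2) *)
Definition Delta (C : numClosedFieldType) (m : nat) (psi : basis m -> C) (t : nat) : C :=
  \sum_(S : {set 'I_m} | (S != set0) && [forall i in S, val i != 0%N])
     purity psi S ^+ (t %/ 2).

Definition negligible (C : numClosedFieldType) (f : nat -> C) : Prop :=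
  forall c : nat, exists N : nat, forall n : nat, (N <= n)%N ->
    `|f n| < (n%:R ^+ c)^-1.

(* Main.v *)
Require Import Defs.
From HB Require Import structures.
From mathcomp Require Import all_boot all_order all_algebra.
From mathcomp Require Import ring zify.
Import Order.TTheory GRing.Theory Num.Theory Num.Def.

Lemma sq_le_exp j : 4 <= j -> j * j <= 2 ^ j.
Proof.
elim: j => [//|j IH] hj.
have [j3|j4] : j = 3 \/ 4 <= j by lia.
  by rewrite j3.
have := IH j4; rewrite expnS; nia.
Qed.

Lemma poly_exp c : exists N, forall n, N <= n -> n ^ c <= 2 ^ n.
Proof.
case: c => [|c]; first by exists 0 => n _; rewrite expn0 expn_gt0.
pose N0 := maxn 4 c.+2.
have HN0 : forall j, N0 <= j -> c.+1 * j.+1 <= 2 ^ j.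
  move=> j hj; have h4 : 4 <= j by lia.
  have := sq_le_exp _ h4; nia.
exists (c.+1 * N0) => n hn.
pose j := n %/ c.+1.
have hj : N0 <= j by rewrite /j leq_divRL // mulnC.
have h1 : n < j.+1 * c.+1 by apply: ltn_ceil.
have h2 : j * c.+1 <= n by apply: leq_trunc_div.
apply: leq_trans (_ : (2 ^ j) ^ c.+1 <= _).
  apply: leq_trans (_ : (c.+1 * j.+1) ^ c.+1 <= _).
    by rewrite leq_exp2r //; lia.
  by rewrite leq_exp2r //; apply: HN0.
by rewrite -expnM leq_pexp2l // mulnC.
Qed.


Local Open Scope ring_scope.

Section P1.
Variable C : numClosedFieldType.
Variable m : nat.
Variable S : {set 'I_m}.

Definition split_f (f : basis m) : asg S * asg (~: S) :=
  ([ffun j => f (val j)], [ffun k => f (val k)]).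

Lemma glueK x y : split_f (glue x y) = (x, y).
Proof.
rewrite /split_f; congr pair; apply/ffunP => j; rewrite !ffunE.
  by rewrite valK.
have jS : val j \notin S by have := valP j; rewrite inE.
by rewrite (insubN (sub_qubits S) jS) valK.
Qed.

Lemma splitK f : glue (split_f f).1 (split_f f).2 = f.
Proof.
apply/ffunP => i; rewrite ffunE /=.
case: insubP => [u _ <-|iS]; first by rewrite ffunE.
have iS' : i \in ~: S by rewrite inE.
by rewrite (insubT (fun i => i \in ~: S) iS') ffunE.
Qed.

Lemma sum_glue (F : basis m -> C) :
  \sum_(x : asg S) \sum_(y : asg (~: S)) F (glue x y) = \sum_f F f.
Proof.
rewrite pair_bigA /= (reindex (fun p : asg S * asg (~: S) => glue p.1 p.2)) //.
exists split_f => [[x y] _|f _]; first by rewrite glueK.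
exact: splitK.
Qed.

Variable psi : basis m -> C.
Local Notation M x y := (psi (glue x y)).

Definition G (y y' : asg (~: S)) := \sum_(x : asg S) (M x y)^* * M x y'.

Lemma sum4_swap (F : asg S -> asg S -> asg (~: S) -> asg (~: S) -> C) :
  \sum_x \sum_x' \sum_y \sum_y' F x x' y y' = \sum_y' \sum_y \sum_x \sum_x' F x x' y y'.
Proof.
transitivity (\sum_x \sum_x' \sum_y' \sum_y F x x' y y').
  by apply: eq_bigr => x _; apply: eq_bigr => x' _; rewrite exchange_big.
transitivity (\sum_x \sum_y' \sum_x' \sum_y F x x' y y').
  by apply: eq_bigr => x _; rewrite exchange_big.
transitivity (\sum_x \sum_y' \sum_y \sum_x' F x x' y y').
  by apply: eq_bigr => x _; apply: eq_bigr => y' _; rewrite exchange_big.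
rewrite exchange_big; apply: eq_bigr => y' _; by rewrite exchange_big.
Qed.

Lemma purity_eq : purity psi S = \sum_y' \sum_y `|G y y'| ^+ 2.
Proof.
transitivity (\sum_y' \sum_y \sum_(x : asg S) \sum_(x' : asg S)
   ((M x y)^* * M x y') * (M x' y * (M x' y')^*)); last first.
  apply: eq_bigr => y' _; apply: eq_bigr => y _.
  rewrite normCK /G rmorph_sum big_distrl; apply: eq_bigr => x _ /=.
  rewrite big_distrr; apply: eq_bigr => x' _.
  by rewrite /= rmorphM /= conjCK.
rewrite -(sum4_swap (fun x x' y y' => (M x y)^* * M x y' * (M x' y * (M x' y')^* ))) /purity /rdm.
apply: eq_bigr => x _; apply: eq_bigr => x' _.
rewrite [RHS]exchange_big big_distrl; apply: eq_bigr => y _; rewrite big_distrr; apply: eq_bigr => y' _.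
by rewrite /=; ring.
Qed.

Lemma Qbound (c : C) : 0 <= c ->
  (forall (a : asg S -> C) (b : asg (~: S) -> C),
     is_unit_vec a -> is_unit_vec b -> `|overlap psi a b| ^+ 2 <= c) ->
  forall a : asg S -> C,
    \sum_y `|\sum_x (M x y)^* * a x| ^+ 2 <= c * \sum_x `|a x| ^+ 2.
Proof.
move=> c0 far a.
pose w y := \sum_x (M x y)^* * a x.
pose sa := \sum_x `|a x| ^+ 2.
pose sw := \sum_y `|w y| ^+ 2.
rewrite -/sa -/sw.
have sa0 : 0 <= sa by apply: sumr_ge0 => x _; apply: exprn_ge0.
have sw0 : 0 <= sw by apply: sumr_ge0 => x _; apply: exprn_ge0.
have [saz|sanz] := eqVneq sa 0.
  have az x : a x = 0.
    have := @psumr_eq0P _ _ predT (fun x => `|a x| ^+ 2) (fun x _ => exprn_ge0 2 (normr_ge0 (a x))) saz x isT.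
    by move/eqP; rewrite sqrf_eq0 normr_eq0 => /eqP.
  rewrite saz mulr0 /sw big1 // => y _.
  by rewrite /w big1 ?normr0 ?expr0n // => x _; rewrite az mulr0.
have [swz|swnz] := eqVneq sw 0.
  by rewrite swz mulr_ge0.
have sap : 0 < sa by rewrite lt_def sanz.
have swp : 0 < sw by rewrite lt_def swnz.
pose al := sqrtC sa. pose be := sqrtC sw.
have alp : 0 < al by rewrite sqrtC_gt0.
have bep : 0 < be by rewrite sqrtC_gt0.
have al2 : al ^+ 2 = sa by rewrite sqrtCK.
have be2 : be ^+ 2 = sw by rewrite sqrtCK.
pose a' x := a x / al. pose b y := (w y)^* / be.
have ua : is_unit_vec a'.
  rewrite /is_unit_vec /a'.
  under eq_bigr => x _ do rewrite normrM normfV (gtr0_norm alp) exprMn exprVn al2.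
  by rewrite -mulr_suml divff.
have ub : is_unit_vec b.
  rewrite /is_unit_vec /b.
  under eq_bigr => y _ do rewrite normrM normfV (gtr0_norm bep) exprMn exprVn be2 norm_conjC.
  by rewrite -mulr_suml divff.
have := far a' b ua ub.
have ov : overlap psi a' b = sw / (al * be).
  rewrite /overlap exchange_big /sw mulr_suml; apply: eq_bigr => y _.
  rewrite normCK /w big_distrl mulr_suml; apply: eq_bigr => x _.
  by rewrite /a' /b /=; field; rewrite ?lt0r_neq0 // gt_eqF.
rewrite ov normrM normfV !gtr0_norm ?mulr_gt0 // expr_div_n exprMn al2 be2.
rewrite ler_pdivrMr ?mulr_gt0 // expr2 mulrA ler_pM2r //.
Qed.

Lemma purity_bound (c : C) : 0 <= c ->
  (forall (a : asg S -> C) (b : asg (~: S) -> C),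
     is_unit_vec a -> is_unit_vec b -> `|overlap psi a b| ^+ 2 <= c) ->
  is_unit_vec psi -> 0 <= purity psi S <= c.
Proof.
move=> c0 far upsi; rewrite purity_eq; apply/andP; split.
  by apply: sumr_ge0 => y' _; apply: sumr_ge0 => y _; apply: exprn_ge0.
apply: le_trans (_ : \sum_y' c * \sum_x `|M x y'| ^+ 2 <= c).
  apply: ler_sum => y' _; rewrite /G; exact: (@Qbound c c0 far (fun x => M x y')).
rewrite -mulr_sumr exchange_big /=.
rewrite (sum_glue (fun f => `|psi f| ^+ 2)).
by move: upsi; rewrite /is_unit_vec => ->; rewrite mulr1.
Qed.
End P1.

Lemma card_sets m : #|{set 'I_m}| = (2 ^ m)%N.
Proof. by rewrite -cardsT -powersetT card_powerset cardsT card_ord. Qed.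

Lemma part1 (C : numClosedFieldType) (m : nat) (psi : basis m -> C) (eps : C) (t : nat) :
  is_unit_vec psi -> 0 < eps <= 1 -> far_from_separable psi eps ->
  0 <= Delta psi t <= 2 ^+ m * (1 - eps ^+ 2) ^+ (t %/ 2).
Proof.
move=> up /andP[e0 e1] far.
set c := 1 - eps ^+ 2.
have c0 : 0 <= c by rewrite subr_ge0 exprn_ile1 // ltW.
have key : forall S : {set 'I_m}, (S != set0) && [forall i in S, val i != 0%N] ->
    0 <= purity psi S <= c.
  move=> S /andP[Sn0 /forallP Sa]; apply: purity_bound => // a b ua ub.
  apply: far => //.
  have [i iS] := set0Pn _ Sn0.
  have m0 : (0 < m)%N := leq_ltn_trans (leq0n i) (ltn_ord i).
  apply/eqP => ST; have := Sa (Ordinal m0); rewrite ST inE /=.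
  done.
rewrite /Delta; apply/andP; split.
  apply: sumr_ge0 => S /key /andP[p0 _]; exact: exprn_ge0.
apply: le_trans (_ : \sum_(S : {set 'I_m}) c ^+ (t %/ 2) <= _).
  rewrite [X in _ <= X](bigID (fun S : {set 'I_m} => (S != set0) && [forall i in S, val i != 0%N])) /=.
  rewrite -[X in X <= _]addr0 lerD //.
    apply: ler_sum => S /key /andP[p0 pc]; apply: lerXn2r => //; by rewrite nnegrE.
  by apply: sumr_ge0 => S _; apply: exprn_ge0.
by rewrite sumr_const card_sets -[X in X <= _]mulr_natl natrX.
Qed.

Lemma bern (C : numClosedFieldType) (x : C) (j : nat) : 0 <= x ->
  1 + j%:R * x <= (1 + x) ^+ j.
Proof.
move=> x0; elim: j => [|j IH]; first by rewrite mul0r addr0 expr0.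
rewrite exprSr.
have h1 : 0 <= 1 + x by rewrite addr_ge0.
apply: le_trans (ler_wpM2r h1 IH).
rewrite -subr_ge0.
have -> : (1 + j%:R * x) * (1 + x) - (1 + j.+1%:R * x) = j%:R * x ^+ 2.
  by rewrite -natr1; ring.
by rewrite mulr_ge0 ?ler0n ?exprn_ge0.
Qed.

Lemma decay (C : numClosedFieldType) (n s : nat) (x : C) : (0 < n)%N -> 0 < x <= 1 ->
  8 * n%:R <= (s * 2)%:R * x -> 2 ^+ n./2 * (1 - x) ^+ s * 2 ^+ n < 1.
Proof.
move=> n0 /andP[x0 x1] hs.
pose j := (s %/ (n + n))%N.
have hnn : (0 < n + n)%N by lia.
have h1 : (s < j.+1 * (n + n))%N by apply: ltn_ceil.
have h2 : (j * (n + n) <= s)%N by apply: leq_trunc_div.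
have jx : 1 <= j%:R * x.
  have h3 : (s * 2)%:R * x <= (j.+1 * (n * 4))%:R * x.
    by apply: ler_wpM2r; [exact: ltW | rewrite ler_nat; lia].
  have h4 : (n%:R * 4) * 2 <= (n%:R * 4) * (j%:R * x + x).
    have -> : (n%:R * 4) * 2 = 8 * n%:R :> C by ring.
    have -> : (n%:R * 4) * (j%:R * x + x) = (j.+1 * (n * 4))%:R * x :> C.
      by rewrite -natr1 !natrM; ring.
    exact: le_trans hs h3.
  rewrite ler_pM2l in h4; last by rewrite mulr_gt0 // ltr0n.
  rewrite -(lerD2r 1); apply: le_trans h4 _.
  by rewrite lerD2l.
have X0 : 0 <= x by exact: ltW.
pose P := (1 - x) ^+ s. pose Q := (1 + x) ^+ s.
have P0 : 0 <= P by rewrite exprn_ge0 // subr_ge0.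
have PQ : P * Q <= 1.
  rewrite /P /Q -exprMn.
  have -> : (1 - x) * (1 + x) = 1 - x ^+ 2 by ring.
  apply: exprn_ile1; first by rewrite subr_ge0 exprn_ile1.
  by rewrite lerBlDr lerDl exprn_ge0.
have Q2 : 2 ^+ n * 2 ^+ n <= Q.
  have e1 : 1 <= 1 + x by rewrite lerDl.
  apply: le_trans (_ : (1 + x) ^+ (j * (n + n)) <= Q); last first.
    exact: ler_weXn2l.
  rewrite exprM -exprD; apply: lerXn2r; rewrite ?nnegrE //.
    by rewrite exprn_ge0 // addr_ge0.
  apply: le_trans _ (@bern _ x j X0).
  have -> : 2 = 1 + 1 :> C by [].
  by rewrite lerD2l.
have t0 : 0 < 2 ^+ n :> C by rewrite exprn_gt0.
rewrite -(ltr_pM2r t0) mul1r.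
have -> : 2 ^+ n./2 * P * 2 ^+ n * 2 ^+ n = 2 ^+ n./2 * (P * (2 ^+ n * 2 ^+ n)) by ring.
apply: le_lt_trans (_ : 2 ^+ n./2 * 1 < _).
  apply: ler_wpM2l; first by rewrite exprn_ge0.
  apply: le_trans PQ; exact: ler_wpM2l.
rewrite mulr1 ltr_eXn2l ?ltr1n //; lia.
Qed.

Theorem fact4p8 (C : numClosedFieldType) :
  (forall (m : nat) (psi : basis m -> C) (eps : C) (t : nat),
     is_unit_vec psi -> 0 < eps <= 1 -> far_from_separable psi eps ->
     ~~ odd t ->
     Delta psi t <= 2 ^+ m * (1 - eps ^+ 2) ^+ (t %/ 2))
  /\
  (exists K : C, 0 < K /\
     forall (psi : forall n : nat, basis n./2 -> C) (eps : nat -> C) (t : nat -> nat),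
       (forall n, is_unit_vec (psi n)) ->
       (forall n, 0 < eps n <= 1) ->
       (forall n, far_from_separable (psi n) (eps n)) ->
       (forall n, ~~ odd (t n)) ->
       (forall n, K * n%:R / eps n ^+ 2 <= (t n)%:R) ->
       negligible (fun n => Delta (psi n) (t n))).
Proof.
split.
  move=> m psi eps t up he far _.
  by case/andP: (@part1 _ _ psi eps t up he far).
exists 8; split; first by rewrite ltr0n.
move=> psi eps t up he far ev ht c.
have [N0 HN0] := poly_exp c.
exists (maxn N0 1) => n hn.
have n0 : (0 < n)%N by lia.
have /andP[D0 Dle] := @part1 _ _ (psi n) (eps n) (t n) (up n) (he n) (far n).
rewrite ger0_norm //.
set s := (t n %/ 2)%N in Dle *.
have ts : t n = (s * 2)%N by rewrite divnK // dvdn2 ev.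
have /andP[e0 e1] := he n.
have x0 : 0 < eps n ^+ 2 by rewrite exprn_gt0.
have hx : 0 < eps n ^+ 2 <= 1 by rewrite x0 exprn_ile1 // ltW.
have hs : 8 * n%:R <= (s * 2)%:R * (eps n ^+ 2).
  by have := ht n; rewrite ts ler_pdivrMr.
have dec := @decay _ n s (eps n ^+ 2) n0 hx hs.
have y0 : 0 < n%:R ^+ c :> C by rewrite exprn_gt0 // ltr0n.
have hy : n%:R ^+ c <= 2 ^+ n :> C.
  by rewrite -natrX -[2 ^+ n]natrX ler_nat; apply: HN0; lia.
rewrite -div1r ltr_pdivlMr //.
apply: le_lt_trans dec.
by apply: ler_pM => //; apply: ltW.
Qed.
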